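(* Let $a,b\in\mathbb{R}$, $a<b$, and let $f(t,x,u,z,s)$, $g(t,x,u,z,s)$ be real functions with continuous partial derivatives with respect to $x,u,z,s$. Let $(\tilde{x},\tilde{u})$ be a normal extremizer of $$L[x,u]=\int_a^b f\big(t,x(t),u(t),x(a),x(b)\big)\,dt$$ subject to $x'(t)=g\big(t,x(t),u(t),x(a),x(b)\big)$, where the endpoint condition $x(a)=x_a$ may or may not be imposed and the condition $x(b)=x_b$ may or may not be imposed. Let $H(t,x,u,p,z,s)=f(t,x,u,z,s)+p\,g(t,x,u,z,s)$. Then there exists a function $\tilde{p}$ such that, with all partial derivatives of $H$ evaluated at $\big(t,\tilde{x}(t),\tilde{u}(t),\tilde{p}(t),\tilde{x}(a),\tilde{x}(b)\big)$, for all $t\in[a,b]$: $$\tilde{x}'(t)=H_p,\qquad \tilde{p}'(t)=-H_x,\qquad H_u=0;$$ moreover, $\tilde{p}(a)=-\int_a^b H_z\,dt$ if $x(a)$ is free, and $\tilde{p}(b)=\int_a^b H_s\,dt$ if $x(b)$ is free.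
   Context: An extremizer is a local minimizer or maximizer. It is normal if the Lagrange multiplier rule holds with multiplier $1$ on $f$, i.e. $(\tilde{x},\tilde{u})$ is an extremizer of $\int_a^b\{f+\lambda(g-x')\}dt$ for some multiplier function $\lambda$ (as opposed to the abnormal case where $f$ gets coefficient $0$). $H_x,H_u,H_p,H_z,H_s$ denote partial derivatives of $H$ with respect to its 2nd–6th arguments. *)

(* Defs.v *)
From Stdlib Require Import Reals.
From Coquelicot Require Import Coquelicot.
Open Scope R_scope.

Definition cont5 (F : R -> R -> R -> R -> R -> R) : Prop :=
  forall t x u z s eps, 0 < eps -> exists d, 0 < d /\
    forall t' x' u' z' s', Rabs (t' - t) < d -> Rabs (x' - x) < d ->
      Rabs (u' - u) < d -> Rabs (z' - z) < d -> Rabs (s' - s) < d ->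
      Rabs (F t' x' u' z' s' - F t x u z s) < eps.

Definition pd_x (F : R -> R -> R -> R -> R -> R) t x u z s :=
  Derive (fun y => F t y u z s) x.
Definition pd_u (F : R -> R -> R -> R -> R -> R) t x u z s :=
  Derive (fun y => F t x y z s) u.
Definition pd_z (F : R -> R -> R -> R -> R -> R) t x u z s :=
  Derive (fun y => F t x u y s) z.
Definition pd_s (F : R -> R -> R -> R -> R -> R) t x u z s :=
  Derive (fun y => F t x u z y) s.

Definition smooth_xuzs (F : R -> R -> R -> R -> R -> R) : Prop :=
  cont5 F /\
  (forall t x u z s,
     ex_derive (fun y => F t y u z s) x /\ ex_derive (fun y => F t x y z s) u /\
     ex_derive (fun y => F t x u y s) z /\ ex_derive (fun y => F t x u z y) s) /\
  cont5 (pd_x F) /\ cont5 (pd_u F) /\ cont5 (pd_z F) /\ cont5 (pd_s F).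

Definition cont_on (a b : R) (v : R -> R) : Prop :=
  forall t, a <= t <= b -> forall eps, 0 < eps -> exists d, 0 < d /\
    forall s, a <= s <= b -> Rabs (s - t) < d -> Rabs (v s - v t) < eps.

(* l is the derivative of x at t relative to [a,b] (one-sided at endpoints). *)
Definition deriv_within (a b : R) (x : R -> R) (t l : R) : Prop :=
  forall eps, 0 < eps -> exists d, 0 < d /\
    forall h, h <> 0 -> Rabs h < d -> a <= t + h <= b ->
      Rabs ((x (t + h) - x t) / h - l) < eps.

Definition C1on (a b : R) (x dx : R -> R) : Prop :=
  (forall t, a <= t <= b -> deriv_within a b x t (dx t)) /\ cont_on a b dx.

(* Admissible (x, x', u): x in C^1[a,b], u in C[a,b], the endpoint condition
   x(a)=xa imposed iff fixA = true, and x(b)=xb imposed iff fixB = true. *)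
Definition admissible (a b : R) (fixA : bool) (xa : R) (fixB : bool) (xb : R)
    (x dx u : R -> R) : Prop :=
  C1on a b x dx /\ cont_on a b u /\
  (fixA = true -> x a = xa) /\ (fixB = true -> x b = xb).

Definition feasible (g : R -> R -> R -> R -> R -> R) (a b : R) (fixA : bool) (xa : R)
    (fixB : bool) (xb : R) (x dx u : R -> R) : Prop :=
  admissible a b fixA xa fixB xb x dx u /\
  forall t, a <= t <= b -> dx t = g t (x t) (u t) (x a) (x b).

(* (x',dx',u') lies in the d-neighbourhood of (x,dx,u) (norm ||x||_{C^1} + ||u||_{C^0}). *)
Definition near (a b d : R) (x dx u x' dx' u' : R -> R) : Prop :=
  forall t, a <= t <= b ->
    Rabs (x' t - x t) < d /\ Rabs (dx' t - dx t) < d /\ Rabs (u' t - u t) < d.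

Definition local_extremizer (a b : R) (P : (R -> R) -> (R -> R) -> (R -> R) -> Prop)
    (J : (R -> R) -> (R -> R) -> (R -> R) -> R) (x dx u : R -> R) : Prop :=
  P x dx u /\
  ((exists d, 0 < d /\ forall x' dx' u', P x' dx' u' -> near a b d x dx u x' dx' u' ->
       J x dx u <= J x' dx' u') \/
   (exists d, 0 < d /\ forall x' dx' u', P x' dx' u' -> near a b d x dx u x' dx' u' ->
       J x' dx' u' <= J x dx u)).

Definition Lfun (f : R -> R -> R -> R -> R -> R) (a b : R) (x dx u : R -> R) : R :=
  RInt (fun t => f t (x t) (u t) (x a) (x b)) a b.

Definition Jaug (f g : R -> R -> R -> R -> R -> R) (lam : R -> R) (a b : R)
    (x dx u : R -> R) : R :=
  RInt (fun t => f t (x t) (u t) (x a) (x b)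
                 + lam t * (g t (x t) (u t) (x a) (x b) - dx t)) a b.

(* Normal extremizer: an extremizer of L subject to x' = g (and endpoint
   conditions), such that for some multiplier function lam it is an
   extremizer of the augmented functional with coefficient 1 on f. *)
Definition normal_extremizer (f g : R -> R -> R -> R -> R -> R) (a b : R)
    (fixA : bool) (xa : R) (fixB : bool) (xb : R) (x dx u : R -> R) : Prop :=
  local_extremizer a b (feasible g a b fixA xa fixB xb) (Lfun f a b) x dx u /\
  exists lam : R -> R, cont_on a b lam /\
    local_extremizer a b (admissible a b fixA xa fixB xb) (Jaug f g lam a b) x dx u.

Definition Hfun (f g : R -> R -> R -> R -> R -> R) (t x u p z s : R) : R :=
  f t x u z s + p * g t x u z s.
Definition H_x f g t x u p z s := Derive (fun y => Hfun f g t y u p z s) x.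
Definition H_u f g t x u p z s := Derive (fun y => Hfun f g t x y p z s) u.
Definition H_p f g t x u p z s := Derive (fun y => Hfun f g t x u y z s) p.
Definition H_z f g t x u p z s := Derive (fun y => Hfun f g t x u p y s) z.
Definition H_s f g t x u p z s := Derive (fun y => Hfun f g t x u p z y) s.

(* Main.v *)
Require Import Defs.
From Stdlib Require Import Reals Lra Classical ClassicalEpsilon.
From Coquelicot Require Import Coquelicot.
Open Scope R_scope.


Definition ctn (h : R -> R) := forall t, continuous h t.

Lemma cont_eps h t : continuous h t -> forall eps, 0 < eps ->
  exists d, 0 < d /\ forall s, Rabs (s - t) < d -> Rabs (h s - h t) < eps.
Proof.
  intros H eps He.
  destruct (proj1 (filterlim_locally _ _) H (mkposreal eps He)) as [d Hd].
  exists d. split. apply cond_pos. intros s Hs. apply (Hd s). exact Hs.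
Qed.

Lemma eps_cont h t : (forall eps, 0 < eps ->
  exists d, 0 < d /\ forall s, Rabs (s - t) < d -> Rabs (h s - h t) < eps) ->
  continuous h t.
Proof.
  intros H. apply (proj2 (filterlim_locally _ _)). intros eps.
  destruct (H eps (cond_pos eps)) as [d [Hd Hs]].
  exists (mkposreal d Hd). intros s Hb. apply Hs. exact Hb.
Qed.

Definition cl (a b t : R) := Rmax a (Rmin b t).

Lemma cl_in a b t : a <= b -> a <= cl a b t <= b.
Proof. intros. unfold cl, Rmax, Rmin. repeat destruct Rle_dec; lra. Qed.
Lemma cl_id a b t : a <= t <= b -> cl a b t = t.
Proof. intros. unfold cl, Rmax, Rmin. repeat destruct Rle_dec; lra. Qed.
Lemma cl_lip a b s t : a <= b -> Rabs (cl a b s - cl a b t) <= Rabs (s - t).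
Proof. intros. unfold cl, Rmax, Rmin. repeat destruct Rle_dec; split_Rabs; lra. Qed.

Lemma cont_on_cl a b h : a <= b -> cont_on a b h -> ctn (fun t => h (cl a b t)).
Proof.
  intros Hab H t. apply eps_cont. intros eps He.
  destruct (H (cl a b t) (cl_in a b t Hab) eps He) as [d [Hd Hs]].
  exists d. split; auto. intros s Hst. apply Hs. apply cl_in; auto.
  eapply Rle_lt_trans. apply cl_lip; auto. auto.
Qed.

Lemma ctn_comp5 G c0 c1 c2 c3 c4 : cont5 G -> ctn c0 -> ctn c1 -> ctn c2 -> ctn c3 -> ctn c4 ->
  ctn (fun t => G (c0 t) (c1 t) (c2 t) (c3 t) (c4 t)).
Proof.
  intros HG H0 H1 H2 H3 H4 t. apply eps_cont. intros eps He.
  destruct (HG (c0 t) (c1 t) (c2 t) (c3 t) (c4 t) eps He) as [d [Hd HH]].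
  destruct (cont_eps _ _ (H0 t) d Hd) as [d0 [Hd0 K0]].
  destruct (cont_eps _ _ (H1 t) d Hd) as [d1 [Hd1 K1]].
  destruct (cont_eps _ _ (H2 t) d Hd) as [d2 [Hd2 K2]].
  destruct (cont_eps _ _ (H3 t) d Hd) as [d3 [Hd3 K3]].
  destruct (cont_eps _ _ (H4 t) d Hd) as [d4 [Hd4 K4]].
  exists (Rmin d0 (Rmin d1 (Rmin d2 (Rmin d3 d4)))). split.
  repeat apply Rmin_pos; auto.
  intros s Hs.
  pose proof (Rmin_l d0 (Rmin d1 (Rmin d2 (Rmin d3 d4)))).
  pose proof (Rmin_r d0 (Rmin d1 (Rmin d2 (Rmin d3 d4)))).
  pose proof (Rmin_l d1 (Rmin d2 (Rmin d3 d4))).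
  pose proof (Rmin_r d1 (Rmin d2 (Rmin d3 d4))).
  pose proof (Rmin_l d2 (Rmin d3 d4)).
  pose proof (Rmin_r d2 (Rmin d3 d4)).
  pose proof (Rmin_l d3 d4). pose proof (Rmin_r d3 d4).
  apply HH; [apply K0|apply K1|apply K2|apply K3|apply K4]; lra.
Qed.

Ltac mins := repeat match goal with |- context [Rmin ?x ?y] =>
  let h1 := fresh in let h2 := fresh in
  pose proof (Rmin_l x y) as h1; pose proof (Rmin_r x y) as h2;
  generalize dependent (Rmin x y); intros end.

Lemma tri x y z r1 r2 : Rabs (x - y) < r1 -> Rabs (y - z) < r2 -> Rabs (x - z) < r1 + r2.
Proof. intros. replace (x - z) with ((x - y) + (y - z)) by ring.
  eapply Rle_lt_trans. apply Rabs_triang. lra. Qed.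

Lemma UC G c1 c2 c3 c4 a b : cont5 G -> ctn c1 -> ctn c2 -> ctn c3 -> ctn c4 ->
  forall e, 0 < e -> exists d, 0 < d /\ forall t y1 y2 y3 y4, a <= t <= b ->
  Rabs (y1 - c1 t) < d -> Rabs (y2 - c2 t) < d -> Rabs (y3 - c3 t) < d -> Rabs (y4 - c4 t) < d ->
  Rabs (G t y1 y2 y3 y4 - G t (c1 t) (c2 t) (c3 t) (c4 t)) < e.
Proof.
  intros HG H1 H2 H3 H4 e He.
  assert (Hloc : forall t0, exists d : posreal, forall t y1 y2 y3 y4, Rabs (t - t0) < d ->
    Rabs (y1 - c1 t) < d -> Rabs (y2 - c2 t) < d -> Rabs (y3 - c3 t) < d -> Rabs (y4 - c4 t) < d ->
    Rabs (G t y1 y2 y3 y4 - G t0 (c1 t0) (c2 t0) (c3 t0) (c4 t0)) < e/2 /\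
    Rabs (G t (c1 t) (c2 t) (c3 t) (c4 t) - G t0 (c1 t0) (c2 t0) (c3 t0) (c4 t0)) < e/2).
  { intros t0.
    destruct (HG t0 (c1 t0) (c2 t0) (c3 t0) (c4 t0) (e/2)) as [d0 [Hd0 HH]]; [lra|].
    destruct (cont_eps _ _ (H1 t0) (d0/2)) as [d1 [Hd1 K1]]; [lra|].
    destruct (cont_eps _ _ (H2 t0) (d0/2)) as [d2 [Hd2 K2]]; [lra|].
    destruct (cont_eps _ _ (H3 t0) (d0/2)) as [d3 [Hd3 K3]]; [lra|].
    destruct (cont_eps _ _ (H4 t0) (d0/2)) as [d4 [Hd4 K4]]; [lra|].
    assert (Hp : 0 < Rmin (d0/2) (Rmin d1 (Rmin d2 (Rmin d3 d4)))).
    { repeat apply Rmin_pos; lra. }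
    exists (mkposreal _ Hp). simpl. intros t y1 y2 y3 y4.
    intros Ht Hy1 Hy2 Hy3 Hy4.
  pose proof (Rmin_l (d0/2) (Rmin d1 (Rmin d2 (Rmin d3 d4)))).
  pose proof (Rmin_r (d0/2) (Rmin d1 (Rmin d2 (Rmin d3 d4)))).
  pose proof (Rmin_l d1 (Rmin d2 (Rmin d3 d4))).
  pose proof (Rmin_r d1 (Rmin d2 (Rmin d3 d4))).
  pose proof (Rmin_l d2 (Rmin d3 d4)).
  pose proof (Rmin_r d2 (Rmin d3 d4)).
  pose proof (Rmin_l d3 d4). pose proof (Rmin_r d3 d4).
    assert (Rabs (t - t0) < d0) by lra.
    specialize (K1 t ltac:(lra)). specialize (K2 t ltac:(lra)).
    specialize (K3 t ltac:(lra)). specialize (K4 t ltac:(lra)).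
    split; apply HH; auto; try lra;
    match goal with |- Rabs (?y - ?c0) < _ => match goal with H : Rabs (?c - c0) < _ |- _ =>
      match goal with H' : Rabs (y - c) < _ |- _ => pose proof (tri _ _ _ _ _ H' H); lra end end end. }
  set (delta t0 := proj1_sig (constructive_indefinite_description _ (Hloc t0))).
  assert (Hdel : forall t0, forall t y1 y2 y3 y4, Rabs (t - t0) < delta t0 ->
    Rabs (y1 - c1 t) < delta t0 -> Rabs (y2 - c2 t) < delta t0 -> Rabs (y3 - c3 t) < delta t0 ->
    Rabs (y4 - c4 t) < delta t0 ->
    Rabs (G t y1 y2 y3 y4 - G t0 (c1 t0) (c2 t0) (c3 t0) (c4 t0)) < e/2 /\
    Rabs (G t (c1 t) (c2 t) (c3 t) (c4 t) - G t0 (c1 t0) (c2 t0) (c3 t0) (c4 t0)) < e/2).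
  { intros t0. unfold delta. destruct constructive_indefinite_description as [d Hd]. exact Hd. }
  destruct (compactness_value_1d a b delta) as [d Hd].
  exists d. split. apply cond_pos.
  intros t y1 y2 y3 y4 Ht Hy1 Hy2 Hy3 Hy4.
  specialize (Hd t Ht). apply NNPP in Hd. destruct Hd as [t0 [_ [Htt Hdd]]].
  destruct (Hdel t0 t y1 y2 y3 y4) as [A1 A2]; try lra.
  rewrite Rabs_minus_sym in A2. pose proof (tri _ _ _ _ _ A1 A2). lra.
Qed.

Lemma ctn_bound h a b : a <= b -> ctn h -> exists M, 0 <= M /\ forall t, a <= t <= b -> Rabs (h t) <= M.
Proof.
  intros Hab Hh.
  destruct (continuity_ab_maj (fun t => Rabs (h t)) a b Hab) as [m [Hm _]].
  { intros c _. apply continuity_pt_filterlim. apply (eps_cont (fun t => Rabs (h t))). intros eps He.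
    destruct (cont_eps _ _ (Hh c) eps He) as [d [Hd K]]. exists d; split; auto.
    intros s Hs. specialize (K s Hs). eapply Rle_lt_trans; [apply Rabs_triang_inv2|]. auto.
  }
  exists (Rabs (h m)). split. apply Rabs_pos. auto.
Qed.

Lemma mvt_step (phi : R -> R) y h : (forall z, ex_derive phi z) ->
  exists c, Rabs (c - y) <= Rabs h /\ phi (y + h) - phi y = h * Derive phi c.
Proof.
  intros Hd.
  destruct (MVT_gen phi y (y + h) (Derive phi)) as [c [Hc He]].
  - intros x _. apply Derive_correct. auto.
  - intros x _. apply continuity_pt_filterlim. exact (@ex_derive_continuous R_AbsRing R_NormedModule phi x (Hd x)).
  - exists c. split.
    + revert Hc. unfold Rmin, Rmax. repeat destruct Rle_dec; intros; split_Rabs; lra.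
    + rewrite He. ring.
Qed.

Lemma small ep v d M : Rabs ep < d -> Rabs v <= M -> 0 < M -> Rabs (ep * v) < d * M.
Proof. intros. rewrite Rabs_mult. pose proof (Rabs_pos ep). pose proof (Rabs_pos v). nra. Qed.

Lemma prod_le v w M e : Rabs v <= M -> Rabs w < e / M -> 0 < M -> Rabs (v * w) <= e.
Proof.
  intros H1 H2 HM. rewrite Rabs_mult. pose proof (Rabs_pos v). pose proof (Rabs_pos w).
  assert (M * (e / M) = e) by (field; lra). nra.
Qed.

Lemma abs4 p q r s : Rabs (p + q + (r + s)) <= Rabs p + Rabs q + Rabs r + Rabs s.
Proof.
  eapply Rle_trans; [apply Rabs_triang|].
  pose proof (Rabs_triang p q). pose proof (Rabs_triang r s). lra.
Qed.

Lemma quotA F a b X U eta nu Z S hz hs : smooth_xuzs F -> a <= b -> ctn X -> ctn U ->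
  ctn eta -> ctn nu ->
  forall e, 0 < e -> exists d, 0 < d /\ forall ep, ep <> 0 -> Rabs ep < d ->
  forall t, a <= t <= b ->
  Rabs ((F t (X t + ep * eta t) (U t + ep * nu t) (Z + ep * hz) (S + ep * hs)
         - F t (X t) (U t) Z S) / ep
   - (pd_x F t (X t) (U t) Z S * eta t + pd_u F t (X t) (U t) Z S * nu t
      + pd_z F t (X t) (U t) Z S * hz + pd_s F t (X t) (U t) Z S * hs)) <= e.
Proof.
  intros [_ [HD [Cx [Cu [Cz Cs]]]]] Hab HX HU He Hn e Hep.
  destruct (ctn_bound eta a b Hab He) as [Me [Me0 HMe]].
  destruct (ctn_bound nu a b Hab Hn) as [Mn [Mn0 HMn]].
  set (M := Me + Mn + Rabs hz + Rabs hs + 1).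
  assert (HM : 0 < M) by (unfold M; pose proof (Rabs_pos hz); pose proof (Rabs_pos hs); lra).
  assert (Hc : forall c : R, ctn (fun _ => c)) by (intros c t; apply continuous_const).
  assert (He4 : 0 < e / 4 / M) by (apply Rdiv_lt_0_compat; lra).
  destruct (UC _ X U (fun _ => Z) (fun _ => S) a b Cx HX HU (Hc Z) (Hc S) _ He4) as [dx [Hdx Kx]].
  destruct (UC _ X U (fun _ => Z) (fun _ => S) a b Cu HX HU (Hc Z) (Hc S) _ He4) as [du [Hdu Ku]].
  destruct (UC _ X U (fun _ => Z) (fun _ => S) a b Cz HX HU (Hc Z) (Hc S) _ He4) as [dz [Hdz Kz]].
  destruct (UC _ X U (fun _ => Z) (fun _ => S) a b Cs HX HU (Hc Z) (Hc S) _ He4) as [ds [Hds Ks]].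
  simpl in *.
  set (m := Rmin dx (Rmin du (Rmin dz ds))).
  assert (Hm : 0 < m) by (unfold m; repeat apply Rmin_pos; auto).
  assert (mx : m <= dx) by (unfold m; apply Rmin_l).
  assert (mu : m <= du) by (unfold m; eapply Rle_trans; [apply Rmin_r|apply Rmin_l]).
  assert (mz : m <= dz) by (unfold m; eapply Rle_trans; [apply Rmin_r|];
     eapply Rle_trans; [apply Rmin_r|apply Rmin_l]).
  assert (ms : m <= ds) by (unfold m; eapply Rle_trans; [apply Rmin_r|];
     eapply Rle_trans; [apply Rmin_r|apply Rmin_r]).
  exists (m / M). split. apply Rdiv_lt_0_compat; auto.
  intros ep Hep0 Hepd t Ht.
  assert (dM : m / M * M = m) by (field; lra).
  assert (Ae : Rabs (eta t) <= M) by (specialize (HMe t Ht); pose proof (Rabs_pos hz); pose proof (Rabs_pos hs); unfold M; lra).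
  assert (An : Rabs (nu t) <= M) by (specialize (HMn t Ht); pose proof (Rabs_pos hz); pose proof (Rabs_pos hs); unfold M; lra).
  assert (Az : Rabs hz <= M) by (pose proof (Rabs_pos hs); unfold M; lra).
  assert (As : Rabs hs <= M) by (pose proof (Rabs_pos hz); unfold M; lra).
  pose proof (small ep (eta t) (m/M) M Hepd Ae HM) as Se.
  pose proof (small ep (nu t) (m/M) M Hepd An HM) as Sn.
  pose proof (small ep hz (m/M) M Hepd Az HM) as Sz.
  pose proof (small ep hs (m/M) M Hepd As HM) as Ss.
  rewrite dM in Se, Sn, Sz, Ss.
  destruct (mvt_step (fun y => F t y (U t + ep * nu t) (Z + ep * hz) (S + ep * hs)) (X t) (ep * eta t))
    as [c1 [Hc1 E1]]. { intros z; exact (proj1 (HD t z _ _ _)). }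
  destruct (mvt_step (fun y => F t (X t) y (Z + ep * hz) (S + ep * hs)) (U t) (ep * nu t))
    as [c2 [Hc2 E2]]. { intros z; exact (proj1 (proj2 (HD t _ z _ _))). }
  destruct (mvt_step (fun y => F t (X t) (U t) y (S + ep * hs)) Z (ep * hz))
    as [c3 [Hc3 E3]]. { intros z; exact (proj1 (proj2 (proj2 (HD t _ _ z _)))). }
  destruct (mvt_step (fun y => F t (X t) (U t) Z y) S (ep * hs))
    as [c4 [Hc4 E4]]. { intros z; exact (proj2 (proj2 (proj2 (HD t _ _ _ z)))). }
  simpl in E1, E2, E3, E4.
  assert (Q : (F t (X t + ep * eta t) (U t + ep * nu t) (Z + ep * hz) (S + ep * hs)
         - F t (X t) (U t) Z S) / ep =
     eta t * Derive (fun y => F t y (U t + ep * nu t) (Z + ep * hz) (S + ep * hs)) c1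
   + nu t * Derive (fun y => F t (X t) y (Z + ep * hz) (S + ep * hs)) c2
   + hz * Derive (fun y => F t (X t) (U t) y (S + ep * hs)) c3
   + hs * Derive (fun y => F t (X t) (U t) Z y) c4).
  { apply (Rmult_eq_reg_l ep); auto. field_simplify; auto.
    rewrite <- E1, <- E2, <- E3, <- E4. ring. }
  rewrite Q. clear Q.
  specialize (Kx t c1 (U t + ep * nu t) (Z + ep * hz) (S + ep * hs) Ht).
  specialize (Ku t (X t) c2 (Z + ep * hz) (S + ep * hs) Ht).
  specialize (Kz t (X t) (U t) c3 (S + ep * hs) Ht).
  specialize (Ks t (X t) (U t) Z c4 Ht).
  unfold pd_x, pd_u, pd_z, pd_s in *.
  assert (R0 : forall y, Rabs (y - y) < m) by (intros; rewrite Rminus_diag, Rabs_R0; auto).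
  assert (P1 := prod_le (eta t) _ M (e/4) Ae (Kx ltac:(lra) ltac:(replace (U t + ep * nu t - U t) with (ep * nu t) by ring; lra)
     ltac:(replace (Z + ep * hz - Z) with (ep * hz) by ring; lra) ltac:(replace (S + ep * hs - S) with (ep * hs) by ring; lra)) HM).
  assert (P2 := prod_le (nu t) _ M (e/4) An (Ku ltac:(specialize (R0 (X t)); lra) ltac:(lra)
     ltac:(replace (Z + ep * hz - Z) with (ep * hz) by ring; lra) ltac:(replace (S + ep * hs - S) with (ep * hs) by ring; lra)) HM).
  assert (P3 := prod_le hz _ M (e/4) Az (Kz ltac:(specialize (R0 (X t)); lra) ltac:(specialize (R0 (U t)); lra)
     ltac:(lra) ltac:(replace (S + ep * hs - S) with (ep * hs) by ring; lra)) HM).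
  assert (P4 := prod_le hs _ M (e/4) As (Ks ltac:(specialize (R0 (X t)); lra) ltac:(specialize (R0 (U t)); lra)
     ltac:(specialize (R0 Z); lra) ltac:(lra)) HM).
  match goal with |- Rabs ?L <= _ => match type of P1 with Rabs (?v1 * (?p1 - ?b1)) <= _ =>
  match type of P2 with Rabs (?v2 * (?p2 - ?b2)) <= _ =>
  match type of P3 with Rabs (?v3 * (?p3 - ?b3)) <= _ =>
  match type of P4 with Rabs (?v4 * (?p4 - ?b4)) <= _ =>
  replace L with (v1 * (p1 - b1) + v2 * (p2 - b2) + (v3 * (p3 - b3) + v4 * (p4 - b4))) by ring
  end end end end end.
  eapply Rle_trans; [apply abs4|]. lra.
Qed.

Lemma ctn_RInt h a b : ctn h -> ex_RInt h a b.
Proof. intros H. exact (@ex_RInt_continuous R_CompleteNormedModule h a b (fun z _ => H z)). Qed.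

Lemma RI_plus f g a b : ex_RInt f a b -> ex_RInt g a b ->
  RInt (fun x => f x + g x) a b = RInt f a b + RInt g a b.
Proof. intros. exact (RInt_plus f g a b H H0). Qed.
Lemma RI_minus f g a b : ex_RInt f a b -> ex_RInt g a b ->
  RInt (fun x => f x - g x) a b = RInt f a b - RInt g a b.
Proof. intros. exact (RInt_minus f g a b H H0). Qed.
Lemma RI_scal f a b c : ex_RInt f a b ->
  RInt (fun x => c * f x) a b = c * RInt f a b.
Proof. intros. exact (RInt_scal f a b c H). Qed.
Lemma RI_const a b c : RInt (fun _ => c) a b = (b - a) * c.
Proof. exact (RInt_const a b c). Qed.

Lemma ctn_plus f g : ctn f -> ctn g -> ctn (fun x => f x + g x).
Proof. intros Hf Hg t. apply (continuous_plus f g); auto. Qed.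
Lemma ctn_minus f g : ctn f -> ctn g -> ctn (fun x => f x - g x).
Proof. intros Hf Hg t. apply (continuous_minus f g); auto. Qed.
Lemma ctn_mult f g : ctn f -> ctn g -> ctn (fun x => f x * g x).
Proof. intros Hf Hg t. apply (continuous_mult f g); auto. Qed.
Lemma ctn_const c : ctn (fun _ => c).
Proof. intros t. apply continuous_const. Qed.
Lemma ctn_id : ctn (fun x => x).
Proof. intros t. apply continuous_id. Qed.

Lemma FTC_P h a : ctn h -> forall t, is_derive (fun t => RInt h a t) t (h t).
Proof.
  intros H t. apply (is_derive_RInt h (fun t => RInt h a t) a t); [|apply H].
  exists (mkposreal 1 Rlt_0_1). intros y _. exact (@RInt_correct R_CompleteNormedModule h a y (ctn_RInt h a y H)).
Qed.

Lemma derive_ctn F w : (forall t, is_derive F t (w t)) -> ctn F.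
Proof.
  intros H t. apply (@ex_derive_continuous R_AbsRing R_NormedModule). exists (w t). apply H.
Qed.

Lemma FTC2 F w a b : (forall t, is_derive F t (w t)) -> ctn w -> RInt w a b = F b - F a.
Proof.
  intros H Hw. apply is_RInt_unique. apply (is_RInt_derive F w a b); intros; auto.
Qed.

Lemma sq_zero h a b : a < b -> ctn h -> RInt (fun t => h t * h t) a b = 0 ->
  forall t, a <= t <= b -> h t = 0.
Proof.
  intros Hab Hh HI t0 Ht0. apply NNPP. intros Hne.
  assert (Hp : 0 < h t0 * h t0) by (pose proof (Rsqr_pos_lt _ Hne) as HH; unfold Rsqr in HH; lra).
  assert (Hc := ctn_mult h h Hh Hh).
  destruct (cont_eps _ _ (Hc t0) _ Hp) as [d [Hd K]].
  set (c := Rmax a (t0 - d/2)). set (e := Rmin b (t0 + d/2)).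
  assert (Hc1 : a <= c) by apply Rmax_l.
  assert (He1 : e <= b) by apply Rmin_l.
  assert (Hce : c < e) by (unfold c, e, Rmax, Rmin; repeat destruct Rle_dec; lra).
  assert (Hc2 : t0 - d/2 <= c) by apply Rmax_r.
  assert (He2 : e <= t0 + d/2) by apply Rmin_r.
  assert (Hex : forall u v, ex_RInt (fun t => h t * h t) u v) by (intros; apply ctn_RInt; auto).
  assert (E1 : RInt (fun t => h t * h t) a c + RInt (fun t => h t * h t) c e = RInt (fun t => h t * h t) a e)
    by exact (RInt_Chasles (fun t => h t * h t) a c e (Hex _ _) (Hex _ _)).
  assert (E2 : RInt (fun t => h t * h t) a e + RInt (fun t => h t * h t) e b = RInt (fun t => h t * h t) a b)
    by exact (RInt_Chasles (fun t => h t * h t) a e b (Hex _ _) (Hex _ _)).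
  assert (P1 : 0 <= RInt (fun t => h t * h t) a c) by (apply RInt_ge_0; auto; intros; nra).
  assert (P3 : 0 <= RInt (fun t => h t * h t) e b) by (apply RInt_ge_0; auto; intros; nra).
  assert (P2 : 0 < RInt (fun t => h t * h t) c e).
  { apply RInt_gt_0; auto. intros x Hx. assert (Rabs (x - t0) < d) by (split_Rabs; lra).
    specialize (K x H). split_Rabs; lra. }
  lra.
Qed.

Lemma deriv_zero (Phi : R -> R) c D :
  (forall e, 0 < e -> exists d, 0 < d /\ forall ep, ep <> 0 -> Rabs ep < d ->
     Rabs ((Phi ep - c) / ep - D) <= e) ->
  ((exists d, 0 < d /\ forall ep, Rabs ep < d -> c <= Phi ep) \/
   (exists d, 0 < d /\ forall ep, Rabs ep < d -> Phi ep <= c)) -> D = 0.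
Proof.
  intros HQ Hs. apply NNPP. intros HD.
  assert (He : 0 < Rabs D / 2) by (pose proof (Rabs_pos_lt D HD); lra).
  destruct (HQ _ He) as [d1 [Hd1 K]].
  assert (Hq : forall ep, 0 < ep -> 0 <= (Phi ep - c) -> 0 <= (Phi ep - c) / ep).
  { intros. unfold Rdiv. apply Rmult_le_pos; auto. left; apply Rinv_0_lt_compat; auto. }
  assert (Hq' : forall ep, 0 < ep -> (Phi ep - c) <= 0 -> (Phi ep - c) / ep <= 0).
  { intros. unfold Rdiv. apply Rmult_le_0_r; auto. left; apply Rinv_0_lt_compat; auto. }
  assert (Hn : forall ep, ep < 0 -> 0 <= (Phi ep - c) -> (Phi ep - c) / ep <= 0).
  { intros. unfold Rdiv. apply Rmult_le_0_l; auto. left; apply Rinv_lt_0_compat; auto. }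
  assert (Hn' : forall ep, ep < 0 -> (Phi ep - c) <= 0 -> 0 <= (Phi ep - c) / ep).
  { intros. unfold Rdiv. replace ((Phi ep - c) * / ep) with ((c - Phi ep) * / (- ep)).
    apply Rmult_le_pos; [lra|]. left; apply Rinv_0_lt_compat; lra.
    field; lra. }
  destruct Hs as [[d2 [Hd2 S]]|[d2 [Hd2 S]]];
  set (m := Rmin d1 d2 / 2);
  assert (Hm : 0 < m) by (unfold m; pose proof (Rmin_pos d1 d2 Hd1 Hd2); lra);
  assert (Hm1 : m < d1) by (unfold m; pose proof (Rmin_l d1 d2); lra);
  assert (Hm2 : m < d2) by (unfold m; pose proof (Rmin_r d1 d2); lra);
  assert (A1 : Rabs m < d1) by (rewrite Rabs_pos_eq; lra);
  assert (A2 : Rabs (-m) < d1) by (rewrite Rabs_Ropp, Rabs_pos_eq; lra);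
  assert (B1 : Rabs m < d2) by (rewrite Rabs_pos_eq; lra);
  assert (B2 : Rabs (-m) < d2) by (rewrite Rabs_Ropp, Rabs_pos_eq; lra);
  pose proof (K m ltac:(lra) A1); pose proof (K (-m) ltac:(lra) A2);
  pose proof (S m B1); pose proof (S (-m) B2).
  - pose proof (Hq m Hm ltac:(lra)). pose proof (Hn (-m) ltac:(lra) ltac:(lra)).
    revert H H0 H3 H4. generalize ((Phi m - c) / m) ((Phi (- m) - c) / - m).
    intros q1 q2. clear -He. intros. split_Rabs; lra.
  - pose proof (Hq' m Hm ltac:(lra)). pose proof (Hn' (-m) ltac:(lra) ltac:(lra)).
    revert H H0 H3 H4. generalize ((Phi m - c) / m) ((Phi (- m) - c) / - m).
    intros q1 q2. clear -He. intros. split_Rabs; lra.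
Qed.

Lemma dw_plus a b x dx eta w ep t : deriv_within a b x t dx -> is_derive eta t w ->
  deriv_within a b (fun s => x s + ep * eta s) t (dx + ep * w).
Proof.
  intros Hx He eps Heps.
  apply is_derive_Reals in He.
  destruct (Hx (eps/2)) as [d1 [Hd1 K1]]; [lra|].
  assert (Hp : 0 < eps / (2 * (Rabs ep + 1))) by (apply Rdiv_lt_0_compat; [lra|pose proof (Rabs_pos ep); lra]).
  destruct (He _ Hp) as [d2 K2].
  exists (Rmin d1 d2). split. apply Rmin_pos; auto. apply cond_pos.
  intros h Hh0 Hh Hin.
  specialize (K1 h Hh0 ltac:(pose proof (Rmin_l d1 d2); lra) Hin).
  specialize (K2 h Hh0 ltac:(pose proof (Rmin_r d1 d2); lra)).
  replace ((x (t + h) + ep * eta (t + h) - (x t + ep * eta t)) / h - (dx + ep * w))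
    with (((x (t + h) - x t) / h - dx) + ep * ((eta (t + h) - eta t) / h - w)) by (field; auto).
  eapply Rle_lt_trans; [apply Rabs_triang|]. rewrite Rabs_mult.
  assert (Rabs ep * Rabs ((eta (t + h) - eta t) / h - w) <= Rabs ep * (eps / (2 * (Rabs ep + 1)))).
  { apply Rmult_le_compat_l. apply Rabs_pos. lra. }
  assert (Rabs ep * (eps / (2 * (Rabs ep + 1))) < eps / 2).
  { pose proof (Rabs_pos ep). apply (Rmult_lt_reg_r (2 * (Rabs ep + 1))); [lra|].
    field_simplify; [|lra]. nra. }
  lra.
Qed.

Lemma cont_on_plus a b h w ep : cont_on a b h -> ctn w -> cont_on a b (fun t => h t + ep * w t).
Proof.
  intros Hh Hw t Ht eps He.
  assert (Hw' := ctn_mult (fun _ => ep) w (ctn_const ep) Hw).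
  destruct (Hh t Ht (eps/2)) as [d1 [Hd1 K1]]; [lra|].
  destruct (cont_eps _ _ (Hw' t) (eps/2)) as [d2 [Hd2 K2]]; [lra|].
  exists (Rmin d1 d2). split. apply Rmin_pos; auto.
  intros s Hs Hst.
  specialize (K1 s Hs ltac:(pose proof (Rmin_l d1 d2); lra)).
  specialize (K2 s ltac:(pose proof (Rmin_r d1 d2); lra)).
  replace (h s + ep * w s - (h t + ep * w t)) with ((h s - h t) + (ep * w s - ep * w t)) by ring.
  eapply Rle_lt_trans; [apply Rabs_triang|]. lra.
Qed.

Lemma ctn_cont_on a b h : ctn h -> cont_on a b h.
Proof.
  intros Hh t _ eps He. destruct (cont_eps _ _ (Hh t) eps He) as [d [Hd K]].
  exists d; split; auto.
Qed.
Lemma ctn_opp f : ctn f -> ctn (fun x => - f x).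
Proof. intros Hf t. apply (continuous_opp f); auto. Qed.



Definition Dint (f g : R -> R -> R -> R -> R -> R) (lh xh uh : R -> R) (Z S : R)
  (eta w nu : R -> R) (hz hs : R) (t : R) : R :=
  (pd_x f t (xh t) (uh t) Z S + lh t * pd_x g t (xh t) (uh t) Z S) * eta t
+ (pd_u f t (xh t) (uh t) Z S + lh t * pd_u g t (xh t) (uh t) Z S) * nu t
+ (pd_z f t (xh t) (uh t) Z S + lh t * pd_z g t (xh t) (uh t) Z S) * hz
+ (pd_s f t (xh t) (uh t) Z S + lh t * pd_s g t (xh t) (uh t) Z S) * hs
- lh t * w t.

Lemma ctn_Dint f g lh xh uh Z S eta w nu hz hs : smooth_xuzs f -> smooth_xuzs g ->
  ctn lh -> ctn xh -> ctn uh -> ctn eta -> ctn w -> ctn nu ->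
  ctn (Dint f g lh xh uh Z S eta w nu hz hs).
Proof.
  intros [_ [_ [Fx [Fu [Fz Fs]]]]] [_ [_ [Gx [Gu [Gz Gs]]]]] Hl Hx Hu He Hw Hn.
  unfold Dint.
  assert (C : forall G, cont5 G -> ctn (fun t => G t (xh t) (uh t) Z S)).
  { intros G HG. apply ctn_comp5; auto using ctn_id, ctn_const. }
  assert (K : forall P Q, cont5 P -> cont5 Q ->
     ctn (fun t => P t (xh t) (uh t) Z S + lh t * Q t (xh t) (uh t) Z S)).
  { intros P Q HP HQ. apply ctn_plus. apply C; auto. apply ctn_mult; auto. }
  apply ctn_minus; [|apply ctn_mult; auto].
  apply ctn_plus; [apply ctn_plus; [apply ctn_plus|]|]; apply ctn_mult; auto using ctn_const.
Qed.

Lemma ctn_pert G xh uh eta nu Z S ep hz hs : cont5 G -> ctn xh -> ctn uh -> ctn eta -> ctn nu ->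
  ctn (fun t => G t (xh t + ep * eta t) (uh t + ep * nu t) (Z + ep * hz) (S + ep * hs)).
Proof.
  intros HG Hx Hu He Hn. apply ctn_comp5; auto using ctn_id, ctn_const.
  apply ctn_plus; auto. apply ctn_mult; auto using ctn_const.
  apply ctn_plus; auto. apply ctn_mult; auto using ctn_const.
Qed.

Lemma VAR a b f g fixA xa fixB xb xt dxt ut lam eta w nu :
  a < b -> smooth_xuzs f -> smooth_xuzs g -> cont_on a b lam ->
  local_extremizer a b (admissible a b fixA xa fixB xb) (Jaug f g lam a b) xt dxt ut ->
  (forall t, is_derive eta t (w t)) -> ctn w -> ctn nu ->
  (fixA = true -> eta a = 0) -> (fixB = true -> eta b = 0) ->
  RInt (Dint f g (fun t => lam (cl a b t)) (fun t => xt (cl a b t)) (fun t => ut (cl a b t))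
          (xt a) (xt b) eta w nu (eta a) (eta b)) a b = 0.
Proof.
  intros Hab Hf Hg Hlam [Hadm Hext] Heta Hw Hnu HA HB.
  assert (Hab' : a <= b) by lra.
  destruct Hadm as [[Hdx Hdxc] [Huc [HxA HxB]]].
  assert (Hxc : cont_on a b xt).
  { intros t Ht eps He. destruct (Hdx t Ht 1 Rlt_0_1) as [d1 [Hd1 K1]].
    set (M := Rabs (dxt t) + 1).
    assert (HM : 0 < M) by (unfold M; pose proof (Rabs_pos (dxt t)); lra).
    exists (Rmin d1 (eps / M)). split. apply Rmin_pos; auto. apply Rdiv_lt_0_compat; auto.
    intros s Hs Hst.
    destruct (Req_dec s t) as [->|Hne]. rewrite Rminus_diag, Rabs_R0; auto.
    specialize (K1 (s - t) ltac:(lra) ltac:(pose proof (Rmin_l d1 (eps/M)); lra)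
                  ltac:(replace (t + (s - t)) with s by ring; lra)).
    replace (t + (s - t)) with s in K1 by ring.
    assert (E : xt s - xt t = (s - t) * ((xt s - xt t) / (s - t))) by (field; lra).
    rewrite E, Rabs_mult.
    assert (Rabs ((xt s - xt t) / (s - t)) <= M).
    { unfold M. replace ((xt s - xt t) / (s - t)) with (((xt s - xt t) / (s - t) - dxt t) + dxt t) by ring.
      eapply Rle_trans; [apply Rabs_triang|]. lra. }
    assert (Rabs (s - t) < eps / M) by (pose proof (Rmin_r d1 (eps/M)); lra).
    assert (eps / M * M = eps) by (field; lra).
    pose proof (Rabs_pos (s - t)). pose proof (Rabs_pos ((xt s - xt t) / (s - t))). nra. }
  set (xh := fun t => xt (cl a b t)). set (uh := fun t => ut (cl a b t)).
  set (lh := fun t => lam (cl a b t)). set (dh := fun t => dxt (cl a b t)).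
  assert (Cx : ctn xh) by (apply cont_on_cl; auto).
  assert (Cu : ctn uh) by (apply cont_on_cl; auto).
  assert (Cl : ctn lh) by (apply cont_on_cl; auto).
  assert (Cd : ctn dh) by (apply cont_on_cl; auto).
  assert (Ce : ctn eta) by (apply (derive_ctn eta w); auto).
  set (Phi := fun ep => Jaug f g lam a b (fun t => xt t + ep * eta t) (fun t => dxt t + ep * w t)
                (fun t => ut t + ep * nu t)).
  set (c := Jaug f g lam a b xt dxt ut).
  set (D := Dint f g lh xh uh (xt a) (xt b) eta w nu (eta a) (eta b)).
  apply (deriv_zero Phi c).
  - intros e He.
    destruct (ctn_bound lh a b Hab' Cl) as [ML [ML0 HML]].
    set (e1 := e / ((b - a) * (ML + 1))).
    assert (He1 : 0 < e1) by (unfold e1; apply Rdiv_lt_0_compat; [lra|apply Rmult_lt_0_compat; lra]).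
    destruct (quotA f a b xh uh eta nu (xt a) (xt b) (eta a) (eta b) Hf Hab' Cx Cu Ce Hnu e1 He1)
      as [df [Hdf Kf]].
    destruct (quotA g a b xh uh eta nu (xt a) (xt b) (eta a) (eta b) Hg Hab' Cx Cu Ce Hnu e1 He1)
      as [dg [Hdg Kg]].
    exists (Rmin df dg). split. apply Rmin_pos; auto.
    intros ep Hep0 Hep.
    set (Ie := fun t => f t (xh t + ep * eta t) (uh t + ep * nu t) (xt a + ep * eta a) (xt b + ep * eta b)
      + lh t * (g t (xh t + ep * eta t) (uh t + ep * nu t) (xt a + ep * eta a) (xt b + ep * eta b)
               - (dh t + ep * w t))).
    set (I0 := fun t => f t (xh t) (uh t) (xt a) (xt b) + lh t * (g t (xh t) (uh t) (xt a) (xt b) - dh t)).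
    assert (E1 : Phi ep = RInt Ie a b).
    { unfold Phi, Jaug. apply RInt_ext. intros t Ht. rewrite Rmin_left, Rmax_right in Ht by lra.
      unfold Ie, xh, uh, lh, dh. rewrite (cl_id a b t) by lra. reflexivity. }
    assert (E0 : c = RInt I0 a b).
    { unfold c, Jaug. apply RInt_ext. intros t Ht. rewrite Rmin_left, Rmax_right in Ht by lra.
      unfold I0, xh, uh, lh, dh. rewrite (cl_id a b t) by lra. reflexivity. }
    assert (CIe : ctn Ie).
    { unfold Ie. apply ctn_plus. apply ctn_pert; auto. apply Hf.
      apply ctn_mult; auto. apply ctn_minus. apply ctn_pert; auto. apply Hg.
      apply ctn_plus; auto. apply ctn_mult; auto using ctn_const. }
    assert (CI0 : ctn I0).
    { unfold I0. apply ctn_plus. apply ctn_comp5; auto using ctn_id, ctn_const. apply Hf.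
      apply ctn_mult; auto. apply ctn_minus; auto. apply ctn_comp5; auto using ctn_id, ctn_const. apply Hg. }
    assert (CD : ctn D) by (apply ctn_Dint; auto).
    assert (L1 : RInt (fun t => / ep * (Ie t - I0 t) - D t) a b
       = RInt (fun t => / ep * (Ie t - I0 t)) a b - RInt D a b).
    { apply RI_minus; apply ctn_RInt; auto. apply ctn_mult. apply ctn_const. apply ctn_minus; auto. }
    assert (L2 : RInt (fun t => / ep * (Ie t - I0 t)) a b = / ep * RInt (fun t => Ie t - I0 t) a b).
    { apply RI_scal; apply ctn_RInt; auto. apply ctn_minus; auto. }
    assert (L3 : RInt (fun t => Ie t - I0 t) a b = RInt Ie a b - RInt I0 a b).
    { apply RI_minus; apply ctn_RInt; auto. }
    assert (EQ : (Phi ep - c) / ep - RInt D a b = RInt (fun t => / ep * (Ie t - I0 t) - D t) a b).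
    { rewrite L1, L2, L3, E1, E0. field. auto. }
    rewrite EQ.
    assert (Eb : (b - a) * (e / (b - a)) = e) by (field; lra).
    rewrite <- Eb.
    apply abs_RInt_le_const; auto.
    { apply ctn_RInt. apply ctn_minus; auto. apply ctn_mult. apply ctn_const. apply ctn_minus; auto. }
    intros t Ht.
    specialize (Kf ep Hep0 ltac:(pose proof (Rmin_l df dg); lra) t Ht).
    specialize (Kg ep Hep0 ltac:(pose proof (Rmin_r df dg); lra) t Ht).
    specialize (HML t Ht).
    match type of Kf with Rabs ?A <= _ => match type of Kg with Rabs ?B <= _ =>
      replace (/ ep * (Ie t - I0 t) - D t) with (A + lh t * B) end end.
    2:{ unfold Ie, I0, D, Dint. field. auto. }
    eapply Rle_trans; [apply Rabs_triang|]. rewrite Rabs_mult.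
    assert (Rabs (lh t) * Rabs ((g t (xh t + ep * eta t) (uh t + ep * nu t) (xt a + ep * eta a) (xt b + ep * eta b) -
        g t (xh t) (uh t) (xt a) (xt b)) / ep -
       (pd_x g t (xh t) (uh t) (xt a) (xt b) * eta t + pd_u g t (xh t) (uh t) (xt a) (xt b) * nu t +
        pd_z g t (xh t) (uh t) (xt a) (xt b) * eta a + pd_s g t (xh t) (uh t) (xt a) (xt b) * eta b)) <= ML * e1).
    { apply Rmult_le_compat; auto using Rabs_pos. }
    assert (e1 * (ML + 1) = e / (b - a)) by (unfold e1; field; lra).
    nra.
  - assert (Adm : forall ep, admissible a b fixA xa fixB xb (fun t => xt t + ep * eta t)
       (fun t => dxt t + ep * w t) (fun t => ut t + ep * nu t)).
    { intros ep. split; [split|split; [|split]].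
      - intros t Ht. apply dw_plus; auto.
      - apply cont_on_plus; auto.
      - apply cont_on_plus; auto.
      - intros HfA. rewrite (HA HfA), (HxA HfA). ring.
      - intros HfB. rewrite (HB HfB), (HxB HfB). ring. }
    destruct (ctn_bound eta a b Hab' Ce) as [Me [Me0 HMe]].
    destruct (ctn_bound w a b Hab' Hw) as [Mw [Mw0 HMw]].
    destruct (ctn_bound nu a b Hab' Hnu) as [Mn [Mn0 HMn]].
    set (M := Me + Mw + Mn + 1).
    assert (HM : 0 < M) by (unfold M; lra).
    assert (Near : forall d0, 0 < d0 -> forall ep, Rabs ep < d0 / M ->
      near a b d0 xt dxt ut (fun t => xt t + ep * eta t) (fun t => dxt t + ep * w t) (fun t => ut t + ep * nu t)).
    { intros d0 Hd0 ep Hep t Ht. assert (E : d0 / M * M = d0) by (field; lra).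
      specialize (HMe t Ht). specialize (HMw t Ht). specialize (HMn t Ht).
      split; [|split].
      - replace (xt t + ep * eta t - xt t) with (ep * eta t) by ring.
        rewrite <- E. apply small; auto. unfold M; lra.
      - replace (dxt t + ep * w t - dxt t) with (ep * w t) by ring.
        rewrite <- E. apply small; auto. unfold M; lra.
      - replace (ut t + ep * nu t - ut t) with (ep * nu t) by ring.
        rewrite <- E. apply small; auto. unfold M; lra. }
    destruct Hext as [[d0 [Hd0 K]]|[d0 [Hd0 K]]].
    + left. exists (d0 / M). split. apply Rdiv_lt_0_compat; auto.
      intros ep Hep. unfold c, Phi. apply K. apply Adm. apply Near; auto.
    + right. exists (d0 / M). split. apply Rdiv_lt_0_compat; auto.
      intros ep Hep. unfold c, Phi. apply K. apply Adm. apply Near; auto.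
Qed.

Lemma H_lin (phi psi : R -> R) p x : ex_derive phi x -> ex_derive psi x ->
  Derive (fun y => phi y + p * psi y) x = Derive phi x + p * Derive psi x.
Proof.
  intros H1 H2. rewrite Derive_plus; auto.
  - rewrite Derive_scal. reflexivity.
  - apply ex_derive_scal. auto.
Qed.

Lemma Hx_eq f g t x u p z s : smooth_xuzs f -> smooth_xuzs g ->
  H_x f g t x u p z s = pd_x f t x u z s + p * pd_x g t x u z s.
Proof. intros [_ [Df _]] [_ [Dg _]]. unfold H_x, Hfun. exact (H_lin (fun y => f t y u z s) (fun y => g t y u z s) p x (proj1 (Df t x u z s)) (proj1 (Dg t x u z s))). Qed.
Lemma Hu_eq f g t x u p z s : smooth_xuzs f -> smooth_xuzs g ->
  H_u f g t x u p z s = pd_u f t x u z s + p * pd_u g t x u z s.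
Proof. intros [_ [Df _]] [_ [Dg _]]. unfold H_u, Hfun. exact (H_lin (fun y => f t x y z s) (fun y => g t x y z s) p u (proj1 (proj2 (Df t x u z s))) (proj1 (proj2 (Dg t x u z s)))). Qed.
Lemma Hz_eq f g t x u p z s : smooth_xuzs f -> smooth_xuzs g ->
  H_z f g t x u p z s = pd_z f t x u z s + p * pd_z g t x u z s.
Proof. intros [_ [Df _]] [_ [Dg _]]. unfold H_z, Hfun. exact (H_lin (fun y => f t x u y s) (fun y => g t x u y s) p z (proj1 (proj2 (proj2 (Df t x u z s)))) (proj1 (proj2 (proj2 (Dg t x u z s))))). Qed.
Lemma Hs_eq f g t x u p z s : smooth_xuzs f -> smooth_xuzs g ->
  H_s f g t x u p z s = pd_s f t x u z s + p * pd_s g t x u z s.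
Proof. intros [_ [Df _]] [_ [Dg _]]. unfold H_s, Hfun. exact (H_lin (fun y => f t x u z y) (fun y => g t x u z y) p s (proj2 (proj2 (proj2 (Df t x u z s)))) (proj2 (proj2 (proj2 (Dg t x u z s))))). Qed.
Lemma Hp_eq f g t x u p z s : H_p f g t x u p z s = g t x u z s.
Proof.
  unfold H_p, Hfun. apply is_derive_unique.
  auto_derive; auto. ring.
Qed.

Lemma is_derive_prod F G x dF dG : is_derive F x dF -> is_derive G x dG ->
  is_derive (fun t => F t * G t) x (dF * G x + F x * dG).
Proof.
  intros H1 H2. apply (is_derive_mult F G x dF dG H1 H2). intros; apply Rmult_comm.
Qed.

Lemma IBP (Ax lh eta w : R -> R) a b : ctn Ax -> ctn lh -> ctn w -> (forall t, is_derive eta t (w t)) ->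
  RInt (fun t => Ax t * eta t - lh t * w t) a b =
  RInt Ax a b * eta b + RInt (fun t => (- lh t - RInt Ax a t) * w t) a b.
Proof.
  intros CA Cl Cw De.
  set (P := fun t => RInt Ax a t).
  assert (DP : forall t, is_derive P t (Ax t)) by (apply FTC_P; auto).
  assert (CP : ctn P) by (apply (derive_ctn P Ax); auto).
  assert (Ce : ctn eta) by (apply (derive_ctn eta w); auto).
  assert (F : RInt (fun t => Ax t * eta t + P t * w t) a b = P b * eta b - P a * eta a).
  { apply (FTC2 (fun t => P t * eta t)).
    - intros t. apply is_derive_prod; auto.
    - apply ctn_plus; apply ctn_mult; auto. }
  assert (Pa : P a = 0) by (unfold P; exact (RInt_point a Ax)).
  rewrite Pa in F.
  assert (E : RInt (fun t => Ax t * eta t - lh t * w t) a b =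
     RInt (fun t => (Ax t * eta t + P t * w t) + (- lh t - P t) * w t) a b).
  { apply RInt_ext. intros x _. change ((Ax x * eta x - lh x * w x) = ((Ax x * eta x + P x * w x) + (- lh x - P x) * w x)). ring. }
  rewrite E. rewrite RI_plus.
  - rewrite F. unfold P. rewrite Rmult_0_l, Rminus_0_r. reflexivity.
  - apply ctn_RInt. apply ctn_plus; apply ctn_mult; auto.
  - apply ctn_RInt. apply ctn_mult; auto. apply ctn_minus; auto. apply ctn_opp; auto.
Qed.



Theorem mainTheorem4 (a b : R) (f g : R -> R -> R -> R -> R -> R)
    (fixA : bool) (xa : R) (fixB : bool) (xb : R) (xt dxt ut : R -> R) :
  a < b -> smooth_xuzs f -> smooth_xuzs g ->
  normal_extremizer f g a b fixA xa fixB xb xt dxt ut ->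
  exists pt : R -> R,
    (forall t, a <= t <= b ->
       dxt t = H_p f g t (xt t) (ut t) (pt t) (xt a) (xt b) /\
       deriv_within a b pt t (- H_x f g t (xt t) (ut t) (pt t) (xt a) (xt b)) /\
       H_u f g t (xt t) (ut t) (pt t) (xt a) (xt b) = 0) /\
    (fixA = false ->
       pt a = - RInt (fun t => H_z f g t (xt t) (ut t) (pt t) (xt a) (xt b)) a b) /\
    (fixB = false ->
       pt b = RInt (fun t => H_s f g t (xt t) (ut t) (pt t) (xt a) (xt b)) a b).
Proof.
  intros Hab Hf Hg [[Hfeas _] [lam [Hlam Hext]]].
  assert (Hab' : a <= b) by lra.
  pose proof Hext as [[[Hdx Hdxc] [Huc _]] _].
  assert (Hxc : cont_on a b xt).
  { intros t Ht eps He. destruct (Hdx t Ht 1 Rlt_0_1) as [d1 [Hd1 K1]].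
    set (M := Rabs (dxt t) + 1).
    assert (HM : 0 < M) by (unfold M; pose proof (Rabs_pos (dxt t)); lra).
    exists (Rmin d1 (eps / M)). split. apply Rmin_pos; auto. apply Rdiv_lt_0_compat; auto.
    intros s Hs Hst.
    destruct (Req_dec s t) as [->|Hne]. rewrite Rminus_diag, Rabs_R0; auto.
    specialize (K1 (s - t) ltac:(lra) ltac:(pose proof (Rmin_l d1 (eps/M)); lra)
                  ltac:(replace (t + (s - t)) with s by ring; lra)).
    replace (t + (s - t)) with s in K1 by ring.
    assert (E : xt s - xt t = (s - t) * ((xt s - xt t) / (s - t))) by (field; lra).
    rewrite E, Rabs_mult.
    assert (Rabs ((xt s - xt t) / (s - t)) <= M).
    { unfold M. replace ((xt s - xt t) / (s - t)) with (((xt s - xt t) / (s - t) - dxt t) + dxt t) by ring.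
      eapply Rle_trans; [apply Rabs_triang|]. lra. }
    assert (Rabs (s - t) < eps / M) by (pose proof (Rmin_r d1 (eps/M)); lra).
    assert (eps / M * M = eps) by (field; lra).
    pose proof (Rabs_pos (s - t)). pose proof (Rabs_pos ((xt s - xt t) / (s - t))). nra. }
  set (xh := fun t => xt (cl a b t)). set (uh := fun t => ut (cl a b t)).
  set (lh := fun t => lam (cl a b t)).
  assert (Cx : ctn xh) by (apply cont_on_cl; auto).
  assert (Cu : ctn uh) by (apply cont_on_cl; auto).
  assert (Cl : ctn lh) by (apply cont_on_cl; auto).
  set (Z := xt a). set (S := xt b).
  set (Ax := fun t => pd_x f t (xh t) (uh t) Z S + lh t * pd_x g t (xh t) (uh t) Z S).
  set (Au := fun t => pd_u f t (xh t) (uh t) Z S + lh t * pd_u g t (xh t) (uh t) Z S).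
  set (Az := fun t => pd_z f t (xh t) (uh t) Z S + lh t * pd_z g t (xh t) (uh t) Z S).
  set (As := fun t => pd_s f t (xh t) (uh t) Z S + lh t * pd_s g t (xh t) (uh t) Z S).
  assert (CA : forall P Q, cont5 P -> cont5 Q ->
     ctn (fun t => P t (xh t) (uh t) Z S + lh t * Q t (xh t) (uh t) Z S)).
  { intros P Q HP HQ. apply ctn_plus. apply ctn_comp5; auto using ctn_id, ctn_const.
    apply ctn_mult; auto. apply ctn_comp5; auto using ctn_id, ctn_const. }
  destruct Hf as [Hf0 [Hf1 [Fx [Fu [Fz Fs]]]]] eqn:EHf.
  destruct Hg as [Hg0 [Hg1 [Gx [Gu [Gz Gs]]]]] eqn:EHg.
  assert (CAx : ctn Ax) by (apply CA; auto).
  assert (CAu : ctn Au) by (apply CA; auto).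
  assert (CAz : ctn Az) by (apply CA; auto).
  assert (CAs : ctn As) by (apply CA; auto).
  assert (S1 : forall t, a <= t <= b -> Au t = 0).
  { apply sq_zero; auto.
    pose proof (VAR a b f g fixA xa fixB xb xt dxt ut lam (fun _ => 0) (fun _ => 0) Au
       Hab Hf Hg Hlam Hext (fun t => is_derive_const 0 t) (ctn_const 0) CAu
       (fun _ => eq_refl) (fun _ => eq_refl)) as V.
    rewrite <- V. apply RInt_ext. intros t _. unfold Dint. fold xh uh lh Z S. fold Au.
    change (@eq R (Au t * Au t) (Ax t * 0 + Au t * Au t + Az t * 0 + As t * 0 - lh t * 0)). ring. }
  set (P := fun t => RInt Ax a t).
  assert (DP : forall t, is_derive P t (Ax t)) by (apply FTC_P; auto).
  assert (CP : ctn P) by (apply (derive_ctn P Ax); auto).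
  assert (Pa : P a = 0) by (unfold P; exact (RInt_point a Ax)).
  set (Q := fun t => - lh t - P t).
  assert (CQ : ctn Q) by (apply ctn_minus; auto; apply ctn_opp; auto).
  set (k := RInt Q a b / (b - a)).
  set (w2 := fun t => Q t - k).
  assert (Cw2 : ctn w2) by (apply ctn_minus; auto using ctn_const).
  set (eta2 := fun t => RInt w2 a t).
  assert (De2 : forall t, is_derive eta2 t (w2 t)) by (apply FTC_P; auto).
  assert (e2a : eta2 a = 0) by (unfold eta2; exact (RInt_point a w2)).
  assert (e2b : eta2 b = 0).
  { unfold eta2, w2. rewrite RI_minus; try apply ctn_RInt; auto using ctn_const.
    rewrite RI_const. unfold k. match goal with |- ?x = ?y => change (@eq R x y) end. field. lra. }
  assert (S2 : forall t, a <= t <= b -> w2 t = 0).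
  { apply sq_zero; auto.
    pose proof (VAR a b f g fixA xa fixB xb xt dxt ut lam eta2 w2 (fun _ => 0)
       Hab Hf Hg Hlam Hext De2 Cw2 (ctn_const 0)
       (fun _ => e2a) (fun _ => e2b)) as V.
    rewrite e2a, e2b in V.
    assert (V2 : RInt (fun t => Ax t * eta2 t - lh t * w2 t) a b = 0).
    { rewrite <- V. apply RInt_ext. intros t _. unfold Dint. fold xh uh lh Z S. fold Ax.
      change (@eq R (Ax t * eta2 t - lh t * w2 t) (Ax t * eta2 t + Au t * 0 + Az t * 0 + As t * 0 - lh t * w2 t)). ring. }
    rewrite IBP in V2; auto. change (RInt Ax a b * eta2 b + RInt (fun t => Q t * w2 t) a b = 0) in V2. rewrite e2b, Rmult_0_r, Rplus_0_l in V2.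
    assert (V3 : RInt (fun t => Q t * w2 t) a b = RInt (fun t => w2 t * w2 t + k * w2 t) a b).
    { apply RInt_ext. intros t _. unfold w2. change (@eq R (Q t * (Q t - k)) ((Q t - k) * (Q t - k) + k * (Q t - k))). ring. }
    rewrite V3, RI_plus, RI_scal in V2; try apply ctn_RInt; auto using ctn_mult, ctn_const.
    change (RInt w2 a b) with (eta2 b) in V2. rewrite e2b, Rmult_0_r, Rplus_0_r in V2. exact V2. }
  assert (S3 : forall eta w, (forall t, is_derive eta t (w t)) -> ctn w ->
     (fixA = true -> eta a = 0) -> (fixB = true -> eta b = 0) ->
     RInt Az a b * eta a + RInt As a b * eta b + P b * eta b + k * (eta b - eta a) = 0).
  { intros eta w De Cw HA HB.
    assert (Ce : ctn eta) by (apply (derive_ctn eta w); auto).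
    pose proof (VAR a b f g fixA xa fixB xb xt dxt ut lam eta w (fun _ => 0)
       Hab Hf Hg Hlam Hext De Cw (ctn_const 0) HA HB) as V.
    assert (E1 : RInt (Dint f g (fun t => lam (cl a b t)) (fun t => xt (cl a b t)) (fun t => ut (cl a b t))
          (xt a) (xt b) eta w (fun _ => 0) (eta a) (eta b)) a b =
       RInt (fun t => (Ax t * eta t - lh t * w t) + (eta a * Az t + eta b * As t)) a b).
    { apply RInt_ext. intros t _. unfold Dint. fold xh uh lh Z S. fold Ax Au Az As.
      change (@eq R (Ax t * eta t + Au t * 0 + Az t * eta a + As t * eta b - lh t * w t)
         ((Ax t * eta t - lh t * w t) + (eta a * Az t + eta b * As t))). ring. }
    rewrite E1 in V. clear E1.
    rewrite RI_plus in V; [|apply ctn_RInt; apply ctn_minus; apply ctn_mult; auto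
                           |apply ctn_RInt; apply ctn_plus; apply ctn_mult; auto using ctn_const].
    rewrite RI_plus in V; [|apply ctn_RInt; apply ctn_mult; auto using ctn_const
                           |apply ctn_RInt; apply ctn_mult; auto using ctn_const].
    rewrite RI_scal, RI_scal in V; try (apply ctn_RInt; auto).
    rewrite IBP in V; auto.
    change (RInt Ax a b * eta b + RInt (fun t => Q t * w t) a b + (eta a * RInt Az a b + eta b * RInt As a b) = 0) in V.
    assert (E2 : RInt (fun t => Q t * w t) a b = RInt (fun t => k * w t) a b).
    { apply RInt_ext. intros t Ht. rewrite Rmin_left, Rmax_right in Ht by lra.
      assert (HQ : Q t = k) by (pose proof (S2 t ltac:(lra)) as HH; unfold w2 in HH; lra).
      change (@eq R (Q t * w t) (k * w t)). rewrite HQ. reflexivity. }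
    rewrite E2, RI_scal, (FTC2 eta w a b De Cw) in V; [|apply ctn_RInt; auto].
    change (RInt Ax a b) with (P b) in V.
    match type of V with ?x = ?y => change (@eq R x y) in V end. lra. }
  assert (Hlt : forall t, a <= t <= b -> lam t = - P t - k).
  { intros t Ht. pose proof (S2 t Ht) as HH. unfold w2, Q, lh in HH. rewrite cl_id in HH by lra. lra. }
  assert (Hcl : forall t, a <= t <= b -> xh t = xt t /\ uh t = ut t /\ lh t = lam t).
  { intros t Ht. unfold xh, uh, lh. rewrite cl_id by lra. auto. }
  exists lam. split; [|split].
  - intros t Ht. destruct (Hcl t Ht) as [E1 [E2 E3]]. split; [|split].
    + rewrite Hp_eq. exact (proj2 Hfeas t Ht).
    + rewrite Hx_eq by auto.
      replace (pd_x f t (xt t) (ut t) Z S + lam t * pd_x g t (xt t) (ut t) Z S) with (Ax t)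
        by (unfold Ax; rewrite E1, E2, E3; reflexivity).
      intros eps He. pose proof (proj1 (is_derive_Reals P t (Ax t)) (DP t) eps He) as [d K].
      exists d. split. apply cond_pos. intros h Hh0 Hh Hin.
      rewrite (Hlt (t + h) Hin), (Hlt t Ht).
      specialize (K h Hh0 Hh).
      replace ((- P (t + h) - k - (- P t - k)) / h - - Ax t) with (- ((P (t + h) - P t) / h - Ax t))
        by (field; auto).
      rewrite Rabs_Ropp. exact K.
    + rewrite Hu_eq by auto.
      replace (pd_u f t (xt t) (ut t) Z S + lam t * pd_u g t (xt t) (ut t) Z S) with (Au t)
        by (unfold Au; rewrite E1, E2, E3; reflexivity).
      apply S1; auto.
  - intros HfA.
    assert (V := S3 (fun t => (b - t) / (b - a)) (fun _ => - 1 / (b - a))).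
    assert (E : RInt (fun t => H_z f g t (xt t) (ut t) (lam t) Z S) a b = RInt Az a b).
    { apply RInt_ext. intros t Ht. rewrite Rmin_left, Rmax_right in Ht by lra.
      destruct (Hcl t ltac:(lra)) as [E1 [E2 E3]].
      rewrite Hz_eq by auto. unfold Az. rewrite E1, E2, E3. reflexivity. }
    rewrite E, (Hlt a ltac:(lra)), Pa.
    simpl in V.
    replace ((b - a) / (b - a)) with 1 in V by (field; lra).
    replace ((b - b) / (b - a)) with 0 in V by (field; lra).
    specialize (V ltac:(intros t; auto_derive; auto; field; lra) (ctn_const _)
      ltac:(intros H; rewrite HfA in H; discriminate) ltac:(intros _; reflexivity)).
    match type of V with ?x = ?y => change (@eq R x y) in V end.
    match goal with |- ?x = ?y => change (@eq R x y) end. lra.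
  - intros HfB.
    assert (V := S3 (fun t => (t - a) / (b - a)) (fun _ => 1 / (b - a))).
    assert (E : RInt (fun t => H_s f g t (xt t) (ut t) (lam t) Z S) a b = RInt As a b).
    { apply RInt_ext. intros t Ht. rewrite Rmin_left, Rmax_right in Ht by lra.
      destruct (Hcl t ltac:(lra)) as [E1 [E2 E3]].
      rewrite Hs_eq by auto. unfold As. rewrite E1, E2, E3. reflexivity. }
    rewrite E, (Hlt b ltac:(lra)).
    simpl in V.
    replace ((b - a) / (b - a)) with 1 in V by (field; lra).
    replace ((a - a) / (b - a)) with 0 in V by (field; lra).
    specialize (V ltac:(intros t; auto_derive; auto; field; lra) (ctn_const _)
      ltac:(intros _; reflexivity) ltac:(intros H; rewrite HfB in H; discriminate)).
    match type of V with ?x = ?y => change (@eq R x y) in V end.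
    match goal with |- ?x = ?y => change (@eq R x y) end. lra.
Qed.
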